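(* Under Assumptions A1–A4, let $n_1<n_2$ be two consecutive switch points of the core Two-Tailed Averaging algorithm. Then there exists an evaluation step $n\in[n_1,n_2-E]$ such that $L(n)=\mathcal{O}^E(n)$ or $L(n)=\mathcal{O}_E(n)$.
   Context: Let $\Theta=\mathbb{R}^d$, let $(\theta_t)_{t\in\mathbb{N}_0}$ be a sequence in $\Theta$, let $f\colon\Theta\to\mathbb{R}$ be a loss function, and let $E\in\mathbb{N}$ be the evaluation period. Evaluation steps are the multiples of $E$. For integers $t\ge \Delta\ge 1$ write $\mathrm{avg}(t,\Delta)=\frac{1}{\Delta}\sum_{i=t+1-\Delta}^{t}\theta_i$; set $f(\mathrm{avg}(t,0))=+\infty$. Core Two-Tailed Averaging: it maintains integers $S,L$ and vectors $\theta^S,\theta^L$, initially $S=L=0$, $\theta^S=\theta^L=0$. For $t=1,2,\dots$: first $\theta_t$ is added to both averages, i.e. $\theta^S\leftarrow\theta^S+(\theta_t-\theta^S)/(S+1)$, $S\leftarrow S+1$, and $\theta^L\leftarrow\theta^L+(\theta_t-\theta^L)/(L+1)$, $L\leftarrow L+1$ (so $\theta^S=\mathrm{avg}(t,S)$, $\theta^L=\mathrm{avg}(t,L)$). Then, if $E$ divides $t$: if $f(\theta^S)\le f(\theta^L)$, a switch is performed: $L\leftarrow S$, $\theta^L\leftarrow\theta^S$, $S\leftarrow 0$. $S(t),L(t)$ denote the values after the $t$-th pass through the loop. A time step $n$ is a switch point if a switch is performed at $t=n$; two switch points are consecutive if no switch point lies strictly between them. Optimal length: for $t\ge1$, $\mathcal{O}(t)$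 is a (fixed) minimizer of $\Delta\mapsto f(\mathrm{avg}(t,\Delta))$ over $\Delta\in\{1,\dots,t\}$; $\mathcal{O}_E(n)=\lfloor \mathcal{O}(n)/E\rfloor E$ and $\mathcal{O}^E(n)=\lceil \mathcal{O}(n)/E\rceil E$. Assumptions (for all evaluation steps $n\ge E$): A1: $\Delta\mapsto f(\mathrm{avg}(n,\Delta))$ is strictly decreasing on $\Delta\in\{0,E,2E,\dots,\mathcal{O}_E(n)\}$. A2: for every integer $n_+$ with $\mathcal{O}^E(n)\le n_+\le n$, $f(\mathrm{avg}(n,\mathcal{O}^E(n)))\le f(\mathrm{avg}(n,n_+))$. A3: there exists a positive multiple $n_s$ of $E$ with $\mathcal{O}(n+n_s)-\mathcal{O}(n)<n_s$. A4: $\mathcal{O}(n)\le\mathcal{O}(n+E)$. *)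

(* Defs.v *)
From HB Require Import structures.
From mathcomp Require Import all_boot all_order all_algebra.
From mathcomp Require Import reals constructive_ereal.
Set Implicit Arguments. Unset Strict Implicit. Unset Printing Implicit Defensive.
Import Order.TTheory GRing.Theory Num.Theory.
Local Open Scope ring_scope.

Section TTA.
Variables (R : realType) (d : nat).
Notation vec := 'rV[R]_d.

Definition avg (theta : nat -> vec) (t Delta : nat) : vec :=
  (Delta%:R)^-1 *: \sum_(t.+1 - Delta <= i < t.+1) theta i.

Definition favg (f : vec -> R) (theta : nat -> vec) (t Delta : nat) : \bar R :=
  if Delta == 0%N then +oo%E else (f (avg theta t Delta))%:E.

Record tta_state := TTAState { stS : nat; stL : nat; thS : vec; thL : vec }.

Definition tta_init : tta_state := TTAState 0 0 0 0.

Definition tta_add (th : vec) (st : tta_state) : tta_state :=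
  TTAState (stS st).+1 (stL st).+1
    (thS st + ((stS st).+1%:R)^-1 *: (th - thS st))
    (thL st + ((stL st).+1%:R)^-1 *: (th - thL st)).

Definition tta_switch_cond (f : vec -> R) (E t : nat) (st : tta_state) : bool :=
  (E %| t)%N && (f (thS st) <= f (thL st)).

Definition tta_step (f : vec -> R) (E : nat) (theta : nat -> vec) (t : nat)
    (st : tta_state) : tta_state :=
  let st' := tta_add (theta t) st in
  if tta_switch_cond f E t st' then TTAState 0 (stS st') (thS st') (thS st')
  else st'.

Fixpoint tta_run (f : vec -> R) (E : nat) (theta : nat -> vec) (t : nat)
    : tta_state :=
  match t with
  | 0 => tta_init
  | t'.+1 => tta_step f E theta t'.+1 (tta_run f E theta t')
  end.

Definition Lt (f : vec -> R) (E : nat) (theta : nat -> vec) (t : nat) : nat := stL (tta_run f E theta t).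
Definition St (f : vec -> R) (E : nat) (theta : nat -> vec) (t : nat) : nat := stS (tta_run f E theta t).

Definition switch_point (f : vec -> R) (E : nat) (theta : nat -> vec) (n : nat) : bool :=
  match n with
  | 0 => false
  | n'.+1 => tta_switch_cond f E n'.+1 (tta_add (theta n'.+1) (tta_run f E theta n'))
  end.

Definition is_opt_length (f : vec -> R) (theta : nat -> vec) (O : nat -> nat) : Prop :=
  forall t, (1 <= t)%N ->
    [/\ (1 <= O t)%N, (O t <= t)%N &
        forall Delta, (1 <= Delta <= t)%N ->
          f (avg theta t (O t)) <= f (avg theta t Delta)].

Definition O_lo (E : nat) (O : nat -> nat) n : nat := (O n %/ E * E)%N.
Definition O_up (E : nat) (O : nat -> nat) n : nat :=
  if (E %| O n)%N then O n else ((O n %/ E).+1 * E)%N.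

Definition eval_step (E n : nat) : bool := (E %| n)%N && (E <= n)%N.

Definition A1 (f : vec -> R) (theta : nat -> vec) (E : nat) (O : nat -> nat) : Prop := forall n, eval_step E n ->
  forall k1 k2, (k1 < k2)%N -> (k2 * E <= O_lo E O n)%N ->
    (favg f theta n (k2 * E) < favg f theta n (k1 * E))%E.

Definition A2 (f : vec -> R) (theta : nat -> vec) (E : nat) (O : nat -> nat) : Prop := forall n, eval_step E n ->
  forall np, (O_up E O n <= np <= n)%N ->
    f (avg theta n (O_up E O n)) <= f (avg theta n np).

(* O(n+n_s) - O(n) < n_s, stated in nat without truncated subtraction *)
Definition A3 (E : nat) (O : nat -> nat) : Prop := forall n, eval_step E n ->
  exists ns, [/\ (0 < ns)%N, (E %| ns)%N & (O (n + ns) < O n + ns)%N].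

Definition A4 (E : nat) (O : nat -> nat) : Prop := forall n, eval_step E n ->
  (O n <= O (n + E))%N.

End TTA.

(* Main.v *)
Require Import Defs.
From HB Require Import structures.
From mathcomp Require Import all_boot all_order all_algebra.
From mathcomp Require Import reals constructive_ereal.
From mathcomp Require Import ring lra zify.
Set Implicit Arguments. Unset Strict Implicit.
Import Order.TTheory GRing.Theory Num.Theory.
Local Open Scope ring_scope.

Lemma lmod_aux (K : fieldType) (V : lmodType K) (a c : K) (X th : V) :
  c = a - c * a -> a *: X + c *: (th - a *: X) = c *: (X + th).
Proof.
move=> h; rewrite !scalerDr scalerN scalerA.
have -> : c *: X = a *: X - (c * a) *: X by rewrite -scalerBl -h.
by rewrite addrA addrAC.
Qed.

Lemma avg_upd (R : realType) (d : nat) (theta : nat -> 'rV[R]_d) t s x :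
  (s <= t)%N -> (s = 0%N \/ x = avg theta t s) ->
  x + (s.+1%:R)^-1 *: (theta t.+1 - x) = avg theta t.+1 s.+1.
Proof.
move=> hst hx; rewrite /avg subSS big_nat_recr /=; last by rewrite leq_subr.
case: hx => [->|->].
  rewrite subn0 big_geq // add0r invr1 !scale1r addrC subrK //.
case: (posnP s) => [s0|spos].
  by rewrite s0 subn0 big_geq // add0r invr1 !scale1r addrC subrK.
rewrite /avg; set X := (\sum_(_ <= i < _) _)%R.
have hs : (s%:R : R) != 0 by rewrite pnatr_eq0 -lt0n.
have hs1 : (s.+1%:R : R) != 0 by rewrite pnatr_eq0.
have h : (s.+1%:R : R)^-1 = (s%:R)^-1 - (s.+1%:R)^-1 * (s%:R)^-1.
  by field; rewrite hs /= addrC natr1.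
by apply: lmod_aux.
Qed.

Definition inv (R : realType) (d : nat) (theta : nat -> 'rV[R]_d) (E : nat)
  (st : tta_state R d) (t : nat) : Prop :=
  (stS st <= stL st <= t)%N /\ (stS st = t %[mod E] /\ stL st = t %[mod E]) /\
  ((stS st = 0%N \/ thS st = avg theta t (stS st)) /\ thL st = avg theta t (stL st)).

Lemma run_inv (R : realType) (d : nat) (theta : nat -> 'rV[R]_d) f E t :
  inv theta E (tta_run f E theta t) t.
Proof.
elim: t => [|t [/andP[hSL hLt] [[hS hL] [hs hl]]]].
  rewrite /inv /= /avg big_geq // scaler0.
  by split; [|split; [split|split; [left|]]].
rewrite /= /tta_step /tta_add /=.
move: (tta_run f E theta t) hSL hLt hS hL hs hl => st hSL hLt hS hL hs hl.
have eS : thS st + ((stS st).+1%:R)^-1 *: (theta t.+1 - thS st) = avg theta t.+1 (stS st).+1.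
  by apply: avg_upd => //; apply: leq_trans hLt.
have eL : thL st + ((stL st).+1%:R)^-1 *: (theta t.+1 - thL st) = avg theta t.+1 (stL st).+1.
  by apply: avg_upd => //; right.
rewrite eS eL /tta_switch_cond /=.
case: ifP => [/andP[hE _]|_]; rewrite /inv /=.
  split; first by rewrite /= ltnS (leq_trans hSL).
  split; last by split=> //; left.
  have m1 : forall a, a = t %[mod E] -> a.+1 = t.+1 %[mod E].
    by move=> a ha; rewrite -[a.+1]addn1 -[t.+1]addn1 -modnDml ha modnDml.
  split; [by move: hE; rewrite /dvdn mod0n => /eqP -> | exact: m1].
split; first by apply/andP; split; rewrite ltnS.
have m1 : forall a, a = t %[mod E] -> a.+1 = t.+1 %[mod E].
  by move=> a ha; rewrite -[a.+1]addn1 -[t.+1]addn1 -modnDml ha modnDml.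
by split; [split; apply: m1 | split=> //; right].
Qed.

Section Mult.
Variable E : nat.
Hypothesis E0 : (0 < E)%N.

Definition cu x := if (E %| x)%N then x else ((x %/ E).+1 * E)%N.
Definition fl x := (x %/ E * E)%N.

Lemma cu_dvd x : (E %| cu x)%N.
Proof. by rewrite /cu; case: ifP => // _; apply: dvdn_mull. Qed.
Lemma fl_dvd x : (E %| fl x)%N.
Proof. exact: dvdn_mull. Qed.
Lemma cu_ge x : (x <= cu x)%N.
Proof. by rewrite /cu; case: ifP => // _; apply: ltnW; apply: ltn_ceil. Qed.
Lemma fl_le x : (fl x <= x)%N.
Proof. exact: leq_divM. Qed.
Lemma fl_max x m : (E %| m)%N -> (m <= x)%N -> (m <= fl x)%N.
Proof.
move=> /dvdnP[c ->] h; rewrite /fl leq_pmul2r //.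
by rewrite leq_divRL.
Qed.
Lemma cu_min x m : (E %| m)%N -> (x <= m)%N -> (cu x <= m)%N.
Proof.
move=> hm h; rewrite /cu; case: ifP => // hx.
case/dvdnP: hm h => c -> h.
rewrite leq_pmul2r // ltn_divLR //.
rewrite ltn_neqAle h andbT; apply/negP => /eqP e.
by move: hx; rewrite e dvdn_mull.
Qed.
Lemma mult_lt a b : (E %| a)%N -> (E %| b)%N -> (a < b)%N -> (a + E <= b)%N.
Proof.
move=> /dvdnP[p ->] /dvdnP[q ->]; rewrite ltn_pmul2r // => h.
by rewrite -mulSnr leq_pmul2r.
Qed.
Lemma cu_fl x : (cu x <= fl x + E)%N.
Proof.
rewrite /cu /fl; case: ifP => hx; last by rewrite mulSn addnC.
by rewrite divnK // leq_addr.
Qed.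
Lemma cu_mono x y : (x <= y)%N -> (cu x <= cu y)%N.
Proof. by move=> h; apply: cu_min (cu_dvd y) (leq_trans h (cu_ge y)). Qed.
Lemma fl_mono x y : (x <= y)%N -> (fl x <= fl y)%N.
Proof. by move=> h; apply: fl_max (fl_dvd x) (leq_trans (fl_le x) h). Qed.
Lemma between x m : (E %| m)%N -> (fl x <= m <= cu x)%N -> m = cu x \/ m = fl x.
Proof.
move=> hm /andP[h1 h2].
case: (ltngtP (fl x) m) => [lt||->]; last by right.
- left; apply/eqP; rewrite eqn_leq h2 /=.
  exact: leq_trans (cu_fl x) (mult_lt (fl_dvd x) hm lt).
- by move=> h; move: h1; rewrite leqNgt h.
Qed.
Lemma cu_geE x : (0 < x)%N -> (E <= cu x)%N.
Proof.
move=> h; apply: dvdn_leq (cu_dvd x).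
exact: leq_trans h (cu_ge x).
Qed.
End Mult.

Section Run.
Variables (R : realType) (d : nat) (theta : nat -> 'rV[R]_d) (f : 'rV[R]_d -> R) (E : nat).
Hypothesis E0 : (0 < E)%N.

Notation run := (tta_run f E theta).
Definition SA t := (stS (run t.-1)).+1.
Definition LA t := (stL (run t.-1)).+1.

Lemma add_avg t : thS (tta_add (theta t.+1) (run t)) = avg theta t.+1 (SA t.+1) /\
  thL (tta_add (theta t.+1) (run t)) = avg theta t.+1 (LA t.+1).
Proof.
have [/andP[hSL hLt] [_ [hs hl]]] := run_inv theta f E t.
split; rewrite /tta_add /= /SA /LA /=; apply: avg_upd => //; last by right.
exact: leq_trans hLt.
Qed.

Lemma sp_iff t : switch_point f E theta t.+1 =
  (E %| t.+1)%N && (f (avg theta t.+1 (SA t.+1)) <= f (avg theta t.+1 (LA t.+1))).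
Proof. by rewrite /switch_point /tta_switch_cond; have [-> ->] := add_avg t. Qed.

Lemma SA_LA t : (SA t.+1 <= LA t.+1 <= t.+1)%N.
Proof. by have [/andP[h1 h2] _] := run_inv theta f E t; rewrite /SA /LA /= !ltnS h1 h2. Qed.

Lemma SA_mod t : SA t.+1 = t.+1 %[mod E].
Proof.
have [_ [[h _] _]] := run_inv theta f E t.
by rewrite /SA /= -[(stS _).+1]addn1 -[t.+1]addn1 -modnDml h modnDml.
Qed.
Lemma LA_mod t : LA t.+1 = t.+1 %[mod E].
Proof.
have [_ [[_ h] _]] := run_inv theta f E t.
by rewrite /LA /= -[(stL _).+1]addn1 -[t.+1]addn1 -modnDml h modnDml.
Qed.

Lemma mod_dvd a t : a = t %[mod E] -> (E %| t)%N -> (E %| a)%N.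
Proof. by move=> h ht; rewrite /dvdn h. Qed.

Lemma run_sw t : switch_point f E theta t.+1 ->
  stS (run t.+1) = 0%N /\ stL (run t.+1) = SA t.+1.
Proof. by rewrite /switch_point /= /tta_step => ->. Qed.

Lemma run_nsw t : ~~ switch_point f E theta t.+1 ->
  stS (run t.+1) = SA t.+1 /\ stL (run t.+1) = LA t.+1.
Proof. by rewrite /switch_point /= /tta_step => /negbTE ->. Qed.

Lemma run_incr u j : (E %| u)%N -> (j < E)%N ->
  stS (run (u + j)) = (stS (run u) + j)%N /\ stL (run (u + j)) = (stL (run u) + j)%N.
Proof.
move=> hu; elim: j => [|j IH] hj; first by rewrite !addn0.
have [IS IL] := IH (ltnW hj).
have nd : ~~ (E %| (u + j).+1)%N.
  by rewrite -addnS dvdn_addr // gtnNdvd.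
have ns : ~~ switch_point f E theta (u + j).+1 by rewrite sp_iff (negbTE nd).
rewrite addnS; have [-> ->] := run_nsw ns.
by rewrite /SA /LA /= IS IL !addnS.
Qed.

Lemma SA_next u : (E %| u)%N ->
  SA (u + E) = (stS (run u) + E)%N /\ LA (u + E) = (stL (run u) + E)%N.
Proof.
move=> hu; have hE1 : (E.-1 < E)%N by rewrite ltn_predL.
have [IS IL] := run_incr hu hE1.
rewrite /SA /LA; have -> : (u + E).-1 = (u + E.-1)%N by case: (E) E0 => // e _; rewrite addnS.
by rewrite /= IS IL -!addnS (prednK E0).
Qed.
End Run.

Section Main.
Variables (R : realType) (d : nat) (theta : nat -> 'rV[R]_d) (f : 'rV[R]_d -> R) (E : nat)
  (O : nat -> nat).
Hypothesis E0 : (0 < E)%N.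
Hypothesis hO : is_opt_length f theta O.
Hypothesis h1 : A1 f theta E O.
Hypothesis h2 : A2 f theta E O.
Hypothesis h4 : A4 E O.

Notation run := (tta_run f E theta).

Lemma Opos n : (0 < n)%N -> (0 < O n)%N.
Proof. by move=> h; have [] := hO h. Qed.

Lemma pos_pred u : (0 < u)%N -> u = u.-1.+1.
Proof. by move=> h; rewrite prednK. Qed.

Lemma SA_dvd u : (E %| u)%N -> (0 < u)%N -> (E %| SA theta f E u)%N.
Proof.
move=> hu u0; rewrite (pos_pred u0) in hu *.
by apply: mod_dvd hu; apply: SA_mod.
Qed.

Lemma LA_dvd u : (E %| u)%N -> (0 < u)%N -> (E %| LA theta f E u)%N.
Proof.
move=> hu u0; rewrite (pos_pred u0) in hu *.
by apply: mod_dvd hu; apply: LA_mod.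
Qed.

Lemma SA_LA' u : (0 < u)%N -> (SA theta f E u <= LA theta f E u <= u)%N.
Proof. by move=> u0; rewrite (pos_pred u0); apply: SA_LA. Qed.

Lemma run_sw' u : (0 < u)%N -> switch_point f E theta u ->
  stS (run u) = 0%N /\ stL (run u) = SA theta f E u.
Proof. by case: u => // u _; apply: run_sw. Qed.

Lemma run_nsw' u : (0 < u)%N -> ~~ switch_point f E theta u ->
  stS (run u) = SA theta f E u /\ stL (run u) = LA theta f E u.
Proof. by case: u => // u _; apply: run_nsw. Qed.

Lemma sp_iff' u : (0 < u)%N -> switch_point f E theta u =
  (E %| u)%N && (f (avg theta u (SA theta f E u)) <= f (avg theta u (LA theta f E u))).
Proof. by case: u => // u _; apply: sp_iff. Qed.

Lemma evalk k : eval_step E (k.+1 * E).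
Proof. by rewrite /eval_step dvdn_mull //= leq_pmull. Qed.

Lemma lemI k : (SA theta f E (k.+1 * E) <= cu E (O (k.+1 * E)))%N.
Proof.
elim: k => [|k IH].
  rewrite mul1n; have /andP[a b] := SA_LA' E0.
  exact: leq_trans (leq_trans a b) (cu_geE E0 (Opos E0)).
set u := (k.+1 * E)%N in IH *.
have u0 : (0 < u)%N by rewrite muln_gt0 E0.
have hu : (E %| u)%N by apply: dvdn_mull.
have -> : (k.+2 * E = u + E)%N by rewrite mulSnr.
have [-> _] := SA_next theta f E0 hu.
have mono : (cu E (O u) <= cu E (O (u + E)))%N by apply: (cu_mono E0); apply: h4; apply: evalk.
case sw : (switch_point f E theta u).
  have [-> _] := run_sw' u0 sw.
  rewrite add0n; apply: (cu_geE E0). exact: (Opos (ltn_addl _ E0)).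
move/negbT: sw => sw; have [-> _] := run_nsw' u0 sw.
apply: leq_trans mono.
apply: (mult_lt E0 (SA_dvd hu u0) (cu_dvd _ _)).
rewrite ltn_neqAle IH andbT; apply/negP => /eqP e.
have /andP[sl lu] := SA_LA' u0.
have := h2 (evalk k) (np := LA theta f E u).
rewrite /O_up -/(cu E (O u)) -e sl lu => /(_ isT) hf.
by move: sw; rewrite sp_iff' // hu hf.
Qed.

Lemma main n1 n2 : switch_point f E theta n1 -> switch_point f E theta n2 -> (n1 < n2)%N ->
  (forall m, (n1 < m < n2)%N -> ~~ switch_point f E theta m) ->
  exists n, [/\ (E %| n)%N, (n1 <= n <= n2 - E)%N &
    Lt f E theta n = O_up E O n \/ Lt f E theta n = O_lo E O n].
Proof.
move=> sp1 sp2 lt12 nosw.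
have n1p : (0 < n1)%N by case: (n1) sp1.
have n2p : (0 < n2)%N by case: (n2) sp2.
have hd1 : (E %| n1)%N by move: sp1; rewrite sp_iff' // => /andP[].
have hd2 : (E %| n2)%N by move: sp2; rewrite sp_iff' // => /andP[].
have [_ eL1] := run_sw' n1p sp1.
set L1 := stL (run n1) in eL1.
have [k1 ek1] : exists k, n1 = (k.+1 * E)%N.
  case/dvdnP: hd1 => c ec; exists c.-1; rewrite prednK // lt0n; apply/eqP => c0.
  by move: n1p; rewrite ec c0.
have L1up : (L1 <= cu E (O n1))%N by rewrite eL1 ek1; apply: lemI.
have L1d : (E %| L1)%N by rewrite eL1; apply: SA_dvd.
have [K eK] : exists K, n2 = (n1 + K.+1 * E)%N.
  have : (E %| n2 - n1)%N by apply: dvdn_sub.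
  case/dvdnP => c ec; exists c.-1; rewrite prednK; first by rewrite -ec subnKC // ltnW.
  rewrite lt0n; apply/eqP => c0; move: ec; rewrite c0 mul0n => /eqP.
  by rewrite subn_eq0 leqNgt lt12.
have evj : forall j, eval_step E (n1 + j * E).
  move=> j; rewrite /eval_step dvdn_add ?dvdn_mull //=.
  by apply: leq_trans (leq_addr _ _); apply: dvdn_leq.
have phase : forall j, (j <= K)%N ->
    stS (run (n1 + j * E)) = (j * E)%N /\ stL (run (n1 + j * E)) = (L1 + j * E)%N.
  elim => [|j IH] hj; first by rewrite mul0n addn0 addn0; have [-> ->] := run_sw' n1p sp1.
  have [IS IL] := IH (ltnW hj).
  have ht : (n1 + j.+1 * E = (n1 + j * E) + E)%N by rewrite mulSnr addnA.
  have [eS eL] := SA_next theta f E0 (proj1 (andP (evj j))).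
  have tp : (0 < n1 + j.+1 * E)%N by rewrite ltn_addr.
  have ns : ~~ switch_point f E theta (n1 + j.+1 * E).
    apply: nosw; rewrite -{1}[n1]addn0 ltn_add2l muln_gt0 E0 /= eK ltn_add2l.
    by rewrite ltn_pmul2r.
  have [-> ->] := run_nsw' tp ns.
  by rewrite ht eS eL IS IL mulSnr addnA.
have [PS PL] := phase K (leqnn K).
have [eS2 eL2] := SA_next theta f E0 (proj1 (andP (evj K))).
rewrite PS -addnA -mulSnr -eK in eS2.
rewrite PL -!addnA -mulSnr -eK in eL2.
move: eS2 eL2 => eS2 eL2.
have sw2 : f (avg theta n2 (SA theta f E n2)) <= f (avg theta n2 (LA theta f E n2)).
  by move: sp2; rewrite sp_iff' // => /andP[].
have cl : (fl E (O n2) < LA theta f E n2)%N.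
  rewrite ltnNge; apply/negP => hle.
  case/dvdnP: L1d => a ea.
  have a0 : (0 < a)%N.
    rewrite lt0n; apply/eqP => a0; move: eL1; rewrite ea a0 mul0n => e.
    by have := SA_LA' n1p; rewrite -e.
  have ev2 : eval_step E n2 by rewrite /eval_step hd2 dvdn_leq.
  have := h1 ev2 (k1 := K.+1) (k2 := (a + K.+1)%N).
  rewrite -{1}[K.+1]add0n ltn_add2r a0 mulnDl -ea.
  have hle' : (L1 + K.+1 * E <= O_lo E O n2)%N by move: hle; rewrite eL2.
  move=> /(_ isT hle').
  have nz1 : (L1 + K.+1 * E == 0)%N = false.
    by rewrite addn_eq0 muln_eq0 /= (gtn_eqF E0) andbF.
  have nz2 : (K.+1 * E == 0)%N = false by rewrite muln_eq0 /= (gtn_eqF E0).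
  rewrite /favg nz1 nz2 lte_fin => lt.
  by move: sw2; rewrite eS2 eL2 leNgt lt.
have ltK : (fl E (O (n1 + K * E)) <= L1 + K * E)%N.
  have m := mult_lt E0 (fl_dvd E _) (LA_dvd hd2 n2p) cl.
  rewrite eL2 mulSnr addnA leq_add2r in m.
  apply: leq_trans m; apply: (fl_mono E0).
  by rewrite eK mulSnr addnA; apply: h4.
have cross : forall j, (j <= K)%N -> (fl E (O (n1 + j * E)) <= L1 + j * E)%N ->
    exists2 k, (k <= j)%N & (fl E (O (n1 + k * E)) <= L1 + k * E <= cu E (O (n1 + k * E)))%N.
  elim => [|j IH] hj hfl.
    by exists 0%N => //; move: hfl; rewrite mul0n !addn0 => ->; rewrite L1up.
  case: (leqP (fl E (O (n1 + j * E))) (L1 + j * E)) => h.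
    have [k hk hk2] := IH (ltnW hj) h.
    by exists k => //; apply: leqW.
  exists j.+1 => //; rewrite hfl /=.
  have xd : (E %| L1 + j * E)%N by rewrite dvdn_add // dvdn_mull.
  have := mult_lt E0 xd (fl_dvd E _) h.
  rewrite !mulSnr !addnA => hx; apply: leq_trans hx _.
  apply: leq_trans (fl_mono E0 (h4 (evj j))) _.
  exact: leq_trans (fl_le E _) (cu_ge E0 _).
have [k hk /andP[hlo hup]] := cross K (leqnn K) ltK.
exists (n1 + k * E)%N; split.
- by rewrite dvdn_add // dvdn_mull.
- rewrite leq_addr /= eK mulSnr addnA addnK leq_add2l.
  by rewrite leq_mul2r hk orbT.
- have xd : (E %| L1 + k * E)%N by rewrite dvdn_add // dvdn_mull.
  rewrite /Lt (proj2 (phase k (leq_trans hk (leqnn K)))).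
  by case: (between E0 xd (introT andP (conj hlo hup))) => ->; [left|right].
Qed.
End Main.

Unset Implicit Arguments.

Theorem mainTheorem4 (R : realType) (d : nat) (theta : nat -> 'rV[R]_d)
  (f : 'rV[R]_d -> R) (E : nat) (O : nat -> nat) (n1 n2 : nat) :
  (0 < E)%N ->
  is_opt_length f theta O ->
  A1 f theta E O -> A2 f theta E O -> A3 E O -> A4 E O ->
  switch_point f E theta n1 -> switch_point f E theta n2 -> (n1 < n2)%N ->
  (forall m, (n1 < m < n2)%N -> ~~ switch_point f E theta m) ->
  exists n, [/\ (E %| n)%N, (n1 <= n <= n2 - E)%N &
    Lt f E theta n = O_up E O n \/ Lt f E theta n = O_lo E O n].
Proof.
move=> E0 hO h1 h2 _ h4.
exact: (main E0 hO h1 h2 h4).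
Qed.
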